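(* Define $\tau:\mathrm{Cu}_2\setminus\{\lozenge\}\to\mathbb C$ by $\tau(w)=1$ if $w=s_{\mathbf i1}s_{\mathbf i}^*$ for some $\mathbf i\in\mathbf I$, and $\tau(w)=0$ otherwise, and regard it as the bounded linear functional $f\mapsto\sum_{w}f(w)\tau(w)$ on $\mathcal A$. Then $\tau$ is a non-zero bounded trace on $\mathcal A$ with $\tau(\delta_e)=0$; consequently $\tau$ vanishes on $\mathcal J$ and induces a non-zero bounded trace on $\mathcal A/\mathcal J$.
   Context: Let $\mathrm{Cu}_2$ be the involutive monoid with identity $e$ and zero element $\lozenge$ (so $\lozenge t=\lozenge=t\lozenge$ for all $t$), generated by $s_1,s_2,s_1^*,s_2^*$ subject to $s_1^*s_1=e=s_2^*s_2$ and $s_1^*s_2=\lozenge=s_2^*s_1$, with involution $t\mapsto t^*$ satisfying $(t^* )^*=t$, $(tu)^*=u^*t^*$. Let $\mathbf I_0=\{\emptyset\}$, $\mathbf I_n=\{1,2\}^n$, $\mathbf I=\bigcup_{n\ge0}\mathbf I_n$ (finite words; $\mathbf i1$ denotes the word $\mathbf i$ followed by the letter $1$). For $\mathbf i=(i_1,\dots,i_k)\in\mathbf I$ put $s_{\mathbf i}=s_{i_1}\cdots s_{i_k}$ ($s_\emptyset=e$) and $s_{\mathbf i}^*=(s_{\mathbf i})^*$. Let $\mathcal A=\ell^1(\mathrm{Cu}_2\setminus\{\lozenge\})$ with product $\#$ determined by bilinearity and continuity from $\delta_s\#\delta_t=\delta_{st}$ if $st\neq\lozenge$ and $\delta_s\#\delta_t=0$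 if $st=\lozenge$; this is a unital Banach algebra with unit $\delta_e$. Let $f_0=\delta_e-\delta_{s_1s_1^*}-\delta_{s_2s_2^*}$ and let $\mathcal J$ be the closed two-sided ideal of $\mathcal A$ generated by $f_0$. A trace on a Banach algebra $\mathcal B$ is a linear functional $\tau$ with $\tau(ab)=\tau(ba)$ for all $a,b\in\mathcal B$. *)

(* Defs.v *)
From HB Require Import structures.
From mathcomp Require Import all_boot all_order all_algebra.
From mathcomp Require Import all_classical reals ereal esum.
From mathcomp Require Import complex.

Set Implicit Arguments.
Unset Strict Implicit.
Unset Printing Implicit Defensive.

Import Order.TTheory GRing.Theory Num.Theory.
Local Open Scope ring_scope.
Local Open Scope complex_scope.

(** Letters: [false] stands for the generator index 1, [true] for index 2.
   Words [seq bool] are elements of I.  Every element of Cu_2 \ {◇} is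
   uniquely of the form s_mu s_nu^*, represented by the pair (mu, nu). *)

Definition l1 : bool := false.
Definition l2 : bool := true.

Definition word := seq bool.
Definition Cu2 := (word * word)%type.

Definition Cu2_e : Cu2 := ([::], [::]).

Definition Cu2_s (i : bool) : Cu2 := ([:: i], [::]).
Definition Cu2_sstar (i : bool) : Cu2 := ([::], [:: i]).

Definition Cu2_star (w : Cu2) : Cu2 := (w.2, w.1).

(** product; [None] is the zero element ◇.
   s_mu s_nu^* s_a s_b^* = s_(mu a') s_b^*      if a = nu a'
                         = s_mu s_(b nu')^*     if nu = a nu'
                         = ◇                   otherwise *)
Definition Cu2_mul (u v : Cu2) : option Cu2 :=
  let: (mu, nu) := u in let: (a, b) := v in
  if prefix nu a then Some (mu ++ drop (size nu) a, b)
  else if prefix a nu then Some (mu, b ++ drop (size a) nu)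
  else None.

Definition cabs (R : realType) (z : R[i]) : R := ComplexField.Normc.normc z.

Section Sums.
Variable R : realType.
Variable T : choiceType.

Definition rsum (g : T -> R) : R :=
  (fine (\esum_(x in [set: T]) (Num.max (g x) 0)%:E)
   - fine (\esum_(x in [set: T]) (Num.max (- g x) 0)%:E))%R.

Definition csum (f : T -> R[i]) : R[i] :=
  Complex (rsum (fun x => complex.Re (f x))) (rsum (fun x => complex.Im (f x))).

Definition abs_summable (f : T -> R[i]) : Prop :=
  (\esum_(x in [set: T]) (cabs (f x))%:E < +oo)%E.

End Sums.

Section L1.
Variable R : realType.

Definition C := R[i].

Definition inA (f : Cu2 -> C) : Prop := abs_summable f.

Definition l1norm (f : Cu2 -> C) : R :=
  fine (\esum_(w in [set: Cu2]) (cabs (f w))%:E).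

Definition delta (s : Cu2) : Cu2 -> C := fun w => if w == s then 1 else 0.

Definition plusL1 (f g : Cu2 -> C) : Cu2 -> C := fun w => f w + g w.
Definition minusL1 (f g : Cu2 -> C) : Cu2 -> C := fun w => f w - g w.
Definition scaleL1 (a : C) (f : Cu2 -> C) : Cu2 -> C := fun w => a * f w.
Definition zeroL1 : Cu2 -> C := fun _ => 0.

Definition conv (f g : Cu2 -> C) : Cu2 -> C := fun w =>
  csum (fun p : Cu2 * Cu2 =>
          if Cu2_mul p.1 p.2 == Some w then f p.1 * g p.2 else 0).

Definition f0 : Cu2 -> C :=
  minusL1 (minusL1 (delta Cu2_e) (delta ([:: l1], [:: l1]))) (delta ([:: l2], [:: l2])).

Definition closed_ideal (I : set (Cu2 -> C)) : Prop :=
  (forall f, I f -> inA f) /\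
  [/\ I zeroL1,
      (forall f g, I f -> I g -> I (plusL1 f g)),
      (forall a f, I f -> I (scaleL1 a f)),
      (forall a f, inA a -> I f -> I (conv a f) /\ I (conv f a))
    & (forall f, inA f ->
         (forall eps : R, 0 < eps -> exists2 g, I g & l1norm (minusL1 f g) < eps) ->
         I f)].

Definition J : set (Cu2 -> C) :=
  fun f => forall I, closed_ideal I -> I f0 -> I f.

Definition tau_w (w : Cu2) : C := if w.1 == rcons w.2 l1 then 1 else 0.

Definition tauA (f : Cu2 -> C) : C := csum (fun w => f w * tau_w w).

End L1.

(* Main.v *)
Require Import Defs.
From HB Require Import structures.
From mathcomp Require Import all_boot all_order all_algebra.
From mathcomp Require Import all_classical reals ereal esum.
From mathcomp Require Import complex.
From mathcomp Require Import ring lra.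
From Stdlib Require Import Lia.
From mathcomp Require Import zify.
Import Order.TTheory GRing.Theory Num.Theory.

Module HelpersC.
Set Implicit Arguments.
Unset Strict Implicit.

Section Comb.

Lemma prefix_cat2 (s t u : word) : prefix (s ++ t) (s ++ u) = prefix t u.
Proof. by rewrite prefix_catr // eqxx. Qed.

Lemma prefix_total (s1 s2 t : word) : prefix s1 t -> prefix s2 t ->
  prefix s1 s2 \/ prefix s2 s1.
Proof.
elim: t s1 s2 => [|x t IH] [|y1 s1] [|y2 s2] //=; try by [left|right].
move=> /andP[/eqP -> p1] /andP[/eqP -> p2]; rewrite eqxx /=; exact: IH.
Qed.

Definition act (o : option Cu2) (x : word) : option word :=
  match o with
  | Some (mu, nu) => if prefix nu x then Some (mu ++ drop (size nu) x) else None
  | None => None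
  end.

Definition mulo (o1 o2 : option Cu2) : option Cu2 :=
  match o1, o2 with Some u, Some v => Cu2_mul u v | _, _ => None end.

Lemma act_mul u v x : act (Cu2_mul u v) x = obind (act (Some u)) (act (Some v) x).
Proof.
case: u v => mu nu [a b] /=.
case: (boolP (prefix b x)) => [/prefixP[y ->{x}]|pbx] /=; last first.
  case: ifP => [/prefixP[a' ->]|_] /=; first by rewrite (negPf pbx).
  case: ifP => [/prefixP[n' ->]|//] /=.
  case: ifP => // /prefixP[z]; rewrite -catA => ex.
  by rewrite ex prefix_prefix in pbx.
rewrite drop_size_cat //.
case: ifP => [/prefixP[a' ->]|na] /=.
  rewrite -!catA (prefix_prefix b y) (prefix_prefix nu (a' ++ y)).
  by rewrite !drop_size_cat.
case: ifP => [/prefixP[n' ->]|an] /=.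
  rewrite drop_size_cat // !prefix_cat2; case: ifP => //= _.
  by rewrite !size_cat !drop_cat ltnNge leq_addr /= ltnNge leq_addr /= !addKn.
case: ifP => // pn; exfalso.
have [] := prefix_total pn (prefix_prefix a y).
  by rewrite na. by rewrite an.
Qed.

Lemma act_mulo o1 o2 x : act (mulo o1 o2) x = obind (act o1) (act o2 x).
Proof.
case: o1 => [u|]; case: o2 => [v|] //=; first exact: act_mul.
by case: v => mu nu; case: ifP.
Qed.

Lemma act_inj o1 o2 : (forall x, act o1 x = act o2 x) -> o1 = o2.
Proof.
case: o1 => [[mu nu]|]; case: o2 => [[a b]|] //= E.
- have := E nu; rewrite prefix_refl drop_size cats0.
  case: ifP => // /prefixP[y ey] [em].
  have := E b; rewrite prefix_refl drop_size cats0.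
  case: ifP => // /prefixP[z ez] _.
  have sy : size y = 0%N.
    have h1 := congr1 size ey; have h2 := congr1 size ez.
    rewrite size_cat in h1; rewrite size_cat in h2; lia.
  have y0 := size0nil sy; move: ey em; rewrite y0 cats0 => ->.
  by rewrite drop_size cats0 => ->.
- by have := E nu; rewrite prefix_refl.
- by have := E b; rewrite prefix_refl.
Qed.


Lemma mulo_assoc o1 o2 o3 : mulo (mulo o1 o2) o3 = mulo o1 (mulo o2 o3).
Proof.
apply: act_inj => x; rewrite !act_mulo; case: (act o3 x) => [y|] /=; rewrite ?act_mulo //.
Qed.


Definition istau (w : Cu2) : bool := w.1 == rcons w.2 l1.
Definition istauo (o : option Cu2) : bool := if o is Some w then istau w else false.

Lemma cat_eq1 (s t : word) c : s ++ t = [:: c] -> (s = [:: c] /\ t = [::]) \/ (s = [::] /\ t = [:: c]).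
Proof. case: s => [|x [|y s]] //= => [->|[-> ->]]; [right|left]; by []. Qed.

Lemma cat_cancel (b s t : word) : b ++ s = b ++ t -> s = t.
Proof. by move/(congr1 (drop (size b))); rewrite !drop_size_cat. Qed.

Lemma istau_mul1 u v : istauo (Cu2_mul u v) -> istauo (Cu2_mul v u).
Proof.
case: u v => mu nu [a b]; rewrite /istauo /istau /l1 /=.
case: ifP => [/prefixP[a' ->]|na].
  rewrite /= -!cats1 drop_size_cat // => /eqP H.
  case: ifP => [/prefixP[m' em]|nbm].
    move: H; rewrite em /= -!cats1 drop_size_cat // -catA => /cat_cancel /cat_eq1 [[-> ->]|[-> ->]];
      by rewrite -catA.
  case: ifP => [/prefixP[b' eb]|nmb].
    move: H; rewrite eb /= -!cats1 drop_size_cat // -catA => /cat_cancel ->.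
    by rewrite catA.
  exfalso; have [] := prefix_total (prefix_prefix mu a') (_ : prefix b (mu ++ a')).
  - by rewrite H prefix_prefix.
  - by move=> h; rewrite h in nmb.
  - by move=> h; rewrite h in nbm.
case: ifP => [/prefixP[n' ->]|//].
rewrite /= -!cats1 drop_size_cat // => /eqP ->.
by rewrite -catA (prefix_prefix b (n' ++ [:: false])) /= drop_size_cat // -cats1 catA.
Qed.


Lemma istau_comm u v : istauo (Cu2_mul u v) = istauo (Cu2_mul v u).
Proof. by apply/idP/idP => /istau_mul1. Qed.

Lemma istau_split (u : Cu2) :
  istau u = istauo (Cu2_mul u ([:: false], [:: false])) || istauo (Cu2_mul u ([:: true], [:: true])) /\
  ~~ (istauo (Cu2_mul u ([:: false], [:: false])) && istauo (Cu2_mul u ([:: true], [:: true]))).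
Proof.
case: u => mu [|j nu].
  case: mu => [|x [|y mu]]; rewrite /istauo /istau /l1 /=; first by [].
    by case: x.
  by case: x; case: y; case: mu => [|? ?]; rewrite /= ?eqseq_cons ?andbF; split.
rewrite /istauo /istau /l1 /=.
by case: j; case: nu => [|k nu] /=; rewrite ?drop0 /= ?cats0 ?orbF ?andbF; split.
Qed.
End Comb.

End HelpersC.
Import HelpersC.

Module HelpersB.
Set Implicit Arguments.
Unset Strict Implicit.
Local Open Scope ring_scope.
Local Open Scope ring_scope.
Local Open Scope classical_set_scope.

Section Gen.
Variable R : realType.

Section Z.
Local Open Scope ereal_scope.
Lemma esumZ (T : choiceType) (a : T -> \bar R) (r : R) : (0 <= r)%R ->
  (forall x, 0 <= a x) ->
  \esum_(x in [set: T]) (r%:E * a x) = r%:E * \esum_(x in [set: T]) a x.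
Proof.
move=> r0 a0; rewrite /esum -ereal_supZl//; last first.
  apply/set0P; exists 0; exists set0; [exact: fsets_set0|by rewrite fsbig_set0].
congr ereal_sup; rewrite image_comp /=; apply: eq_imagel => A [fA _] /=.
rewrite !fsbig_finite//= ge0_sume_distrr// => x _; exact: a0.
Qed.

End Z.

Section T.
Variable T : choiceType.
Implicit Types (g h a b : T -> R).

Definition posp g t : R := Num.max (g t) 0.
Definition negp g t : R := Num.max (- g t) 0.
Definition rsm g := (\esum_(x in [set: T]) `|g x|%:E < +oo)%E.
Definition rs g : R :=
  (fine (\esum_(x in [set: T]) (Num.max (g x) 0)%:E)
   - fine (\esum_(x in [set: T]) (Num.max (- g x) 0)%:E))%R.

Lemma posp_ge0 g t : 0 <= posp g t. Proof. by rewrite /posp le_max lexx orbT. Qed.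
Lemma negp_ge0 g t : 0 <= negp g t. Proof. by rewrite /negp le_max lexx orbT. Qed.
Lemma pospE g t : posp g t - negp g t = g t /\ posp g t + negp g t = `|g t|.
Proof.
rewrite /posp /negp; have [h|h] := lerP 0 (g t); have [h2|h2] := lerP 0 (- g t).
- have -> : g t = 0 by lra.
  by rewrite normr0; split; ring.
- by rewrite ger0_norm//; split; ring.
- by rewrite ltr0_norm//; split; ring.
- lra.
Qed.

Local Open Scope ereal_scope.

Lemma efin_esum a : (forall x, (0 <= a x)%R) ->
  \esum_(x in [set: T]) (a x)%:E < +oo ->
  (fine (\esum_(x in [set: T]) (a x)%:E))%:E = \esum_(x in [set: T]) (a x)%:E.
Proof.
move=> a0 lt; rewrite fineK// ge0_fin_numE// esum_ge0// => x _; rewrite lee_fin; exact: a0.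
Qed.

Lemma esum_lt a b : (forall x, (0 <= a x <= b x)%R) ->
  \esum_(x in [set: T]) (b x)%:E < +oo -> \esum_(x in [set: T]) (a x)%:E < +oo.
Proof.
move=> ab; apply: le_lt_trans; apply: le_esum => x _; rewrite lee_fin.
by case/andP: (ab x).
Qed.

Lemma fine_ge0 a : (forall x, (0 <= a x)%R) ->
  (0 <= fine (\esum_(x in [set: T]) (a x)%:E))%R.
Proof. by move=> a0; apply: fine_ge0; apply: esum_ge0 => x _; rewrite lee_fin. Qed.

Lemma rs_decomp g a b : (forall x, (0 <= a x)%R) -> (forall x, (0 <= b x)%R) ->
  \esum_(x in [set: T]) (a x)%:E < +oo -> \esum_(x in [set: T]) (b x)%:E < +oo ->
  (forall t, g t = a t - b t)%R ->
  rs g = (fine (\esum_(x in [set: T]) (a x)%:E) - fine (\esum_(x in [set: T]) (b x)%:E))%R.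
Proof.
move=> a0 b0 fa fb gab.
have e t : (posp g t + b t = negp g t + a t)%R.
  have [h1 h2] := pospE g t; rewrite gab in h1; lra.
have fP : \esum_(x in [set: T]) (posp g x)%:E < +oo.
  apply: esum_lt fa => x; rewrite posp_ge0 /= /posp ge_max a0 andbT.
  by rewrite gab lerBlDr lerDl.
have fN : \esum_(x in [set: T]) (negp g x)%:E < +oo.
  apply: esum_lt fb => x; rewrite negp_ge0 /= /negp ge_max b0 andbT.
  by rewrite gab opprB lerBlDr lerDl.
have E : \esum_(x in [set: T]) (posp g x)%:E + \esum_(x in [set: T]) (b x)%:E =
         \esum_(x in [set: T]) (negp g x)%:E + \esum_(x in [set: T]) (a x)%:E.
  rewrite -!esumD; last 4 first.
  - by move=> x _; rewrite lee_fin negp_ge0.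
  - by move=> x _; rewrite lee_fin a0.
  - by move=> x _; rewrite lee_fin posp_ge0.
  - by move=> x _; rewrite lee_fin b0.
  by apply: eq_esum => x _; rewrite -!EFinD e.
move: E; rewrite -(efin_esum (posp_ge0 g) fP) -(efin_esum (negp_ge0 g) fN).
rewrite -(efin_esum a0 fa) -(efin_esum b0 fb) -!EFinD => -[E].
rewrite /rs -/(posp g) -/(negp g); lra.
Qed.


Lemma esum_term a t : (forall x, (0 <= a x)%R) ->
  (a t)%:E <= \esum_(x in [set: T]) (a x)%:E.
Proof.
move=> a0; apply: esum_ge; exists [set t].
  by split; [exact: finite_set1|].
by rewrite fsbig_set1.
Qed.

Lemma rsm_le g h : (forall x, `|h x| <= `|g x|)%R -> rsm g -> rsm h.
Proof.
move=> hg; rewrite /rsm; apply: le_lt_trans; apply: le_esum => x _.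
by rewrite lee_fin.
Qed.

Lemma rsm_posp g : rsm g -> \esum_(x in [set: T]) (posp g x)%:E < +oo.
Proof.
apply: esum_lt => x; rewrite posp_ge0 /=; have [_ <-] := pospE g x.
by rewrite lerDl negp_ge0.
Qed.

Lemma rsm_negp g : rsm g -> \esum_(x in [set: T]) (negp g x)%:E < +oo.
Proof.
apply: esum_lt => x; rewrite negp_ge0 /=; have [_ <-] := pospE g x.
by rewrite lerDr posp_ge0.
Qed.

Lemma rs_posneg g : rs g = (fine (\esum_(x in [set: T]) (posp g x)%:E)
   - fine (\esum_(x in [set: T]) (negp g x)%:E))%R.
Proof. by []. Qed.

Lemma rsm_add g h : rsm g -> rsm h -> rsm (fun x => g x + h x)%R.
Proof.
move=> fg fh; rewrite /rsm.
apply: (@le_lt_trans _ _ (\esum_(x in [set: T]) (`|g x| + `|h x|)%:E)).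
  by apply: le_esum => x _; rewrite lee_fin ler_normD.
rewrite (eq_esum (b := fun x => `|g x|%:E + `|h x|%:E)); last by move=> x _; rewrite EFinD.
rewrite esumD; try by move=> x _; rewrite lee_fin.
by apply: lte_add_pinfty.
Qed.

Lemma rsm_scale c g : rsm g -> rsm (fun x => c * g x)%R.
Proof.
move=> fg; rewrite /rsm.
rewrite (eq_esum (b := fun x => `|c|%:E * `|g x|%:E)); last by move=> x _; rewrite normrM EFinM.
rewrite esumZ //; try (by move=> x; rewrite lee_fin).
by apply: lte_mul_pinfty; rewrite ?lee_fin.
Qed.

Lemma esumDr a b : (forall x, (0 <= a x)%R) -> (forall x, (0 <= b x)%R) ->
  \esum_(x in [set: T]) (a x + b x)%:E =
  \esum_(x in [set: T]) (a x)%:E + \esum_(x in [set: T]) (b x)%:E.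
Proof.
move=> a0 b0; rewrite -esumD; try by move=> x _; rewrite lee_fin.
by apply: eq_esum => x _; rewrite EFinD.
Qed.

Lemma fine_esumDr a b : (forall x, (0 <= a x)%R) -> (forall x, (0 <= b x)%R) ->
  \esum_(x in [set: T]) (a x)%:E < +oo -> \esum_(x in [set: T]) (b x)%:E < +oo ->
  fine (\esum_(x in [set: T]) (a x + b x)%:E) =
  (fine (\esum_(x in [set: T]) (a x)%:E) + fine (\esum_(x in [set: T]) (b x)%:E))%R.
Proof.
move=> a0 b0 fa fb; rewrite esumDr// fineD// ge0_fin_numE//;
  by apply: esum_ge0 => x _; rewrite lee_fin.
Qed.

Lemma rsD g h : rsm g -> rsm h -> rs (fun x => g x + h x)%R = (rs g + rs h)%R.
Proof.
move=> fg fh.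
rewrite (@rs_decomp _ (fun x => posp g x + posp h x)%R (fun x => negp g x + negp h x)%R).
- rewrite (fine_esumDr (posp_ge0 g) (posp_ge0 h) (rsm_posp fg) (rsm_posp fh)).
  rewrite (fine_esumDr (negp_ge0 g) (negp_ge0 h) (rsm_negp fg) (rsm_negp fh)).
  rewrite /rs -/(posp g) -/(negp g) -/(posp h) -/(negp h); lra.
- by move=> x; rewrite addr_ge0 ?posp_ge0.
- by move=> x; rewrite addr_ge0 ?negp_ge0.
- by rewrite esumDr ?lte_add_pinfty ?(rsm_posp fg) ?(rsm_posp fh)// => x; rewrite posp_ge0.
- by rewrite esumDr ?lte_add_pinfty ?(rsm_negp fg) ?(rsm_negp fh)// => x; rewrite negp_ge0.
- move=> t; have [<- _] := pospE g t; have [<- _] := pospE h t; lra.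
Qed.


Lemma fine_esumZ c a : (0 <= c)%R -> (forall x, (0 <= a x)%R) ->
  \esum_(x in [set: T]) (a x)%:E < +oo ->
  fine (\esum_(x in [set: T]) (c * a x)%:E) = (c * fine (\esum_(x in [set: T]) (a x)%:E))%R.
Proof.
move=> c0 a0 fa.
rewrite (eq_esum (b := fun x => c%:E * (a x)%:E)); last by move=> x _; rewrite EFinM.
rewrite esumZ //; try (by move=> x; rewrite lee_fin).
by rewrite -(efin_esum a0 fa) -EFinM.
Qed.

Lemma esumZr c a : (0 <= c)%R -> (forall x, (0 <= a x)%R) ->
  \esum_(x in [set: T]) (a x)%:E < +oo ->
  \esum_(x in [set: T]) (c * a x)%:E < +oo.
Proof.
move=> c0 a0 fa.
rewrite (eq_esum (b := fun x => c%:E * (a x)%:E)); last by move=> x _; rewrite EFinM.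
rewrite esumZ //; try (by move=> x; rewrite lee_fin).
by apply: lte_mul_pinfty; rewrite ?lee_fin.
Qed.

Lemma rsZ c g : rsm g -> rs (fun x => c * g x)%R = (c * rs g)%R.
Proof.
move=> fg; have [c0|c0] := lerP 0 c.
  rewrite (@rs_decomp _ (fun x => c * posp g x)%R (fun x => c * negp g x)%R).
  - rewrite !fine_esumZ ?(rsm_posp fg) ?(rsm_negp fg) //; try exact: posp_ge0; try exact: negp_ge0.
    by rewrite /rs -/(posp g) -/(negp g) mulrBr.
  - by move=> x; rewrite mulr_ge0 ?posp_ge0.
  - by move=> x; rewrite mulr_ge0 ?negp_ge0.
  - by apply: esumZr => //; [exact: posp_ge0|exact: rsm_posp].
  - by apply: esumZr => //; [exact: negp_ge0|exact: rsm_negp].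
  - by move=> t; have [<- _] := pospE g t; rewrite mulrBr.
have c0' : (0 <= - c)%R by rewrite oppr_ge0 ltW.
rewrite (@rs_decomp _ (fun x => - c * negp g x)%R (fun x => - c * posp g x)%R).
- rewrite !fine_esumZ ?(rsm_posp fg) ?(rsm_negp fg) //; try exact: posp_ge0; try exact: negp_ge0.
  rewrite /rs -/(posp g) -/(negp g); ring.
- by move=> x; rewrite mulr_ge0 ?negp_ge0.
- by move=> x; rewrite mulr_ge0 ?posp_ge0.
- by apply: esumZr => //; [exact: negp_ge0|exact: rsm_negp].
- by apply: esumZr => //; [exact: posp_ge0|exact: rsm_posp].
- by move=> t; have [<- _] := pospE g t; ring.
Qed.

Lemma rs_le g : rsm g -> (`|rs g| <= fine (\esum_(x in [set: T]) `|g x|%:E))%R.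
Proof.
move=> fg.
rewrite (eq_esum (b := fun x => (posp g x + negp g x)%:E)); last first.
  by move=> x _; have [_ ->] := pospE g x.
rewrite fine_esumDr ?(rsm_posp fg) ?(rsm_negp fg) //; try exact: posp_ge0; try exact: negp_ge0.
rewrite /rs -/(posp g) -/(negp g).
have := fine_ge0 (posp_ge0 g); have := fine_ge0 (negp_ge0 g).
set x := fine _; set y := fine _ => hx hy.
by rewrite ler_norml; apply/andP; split; lra.
Qed.

Lemma rs0 : rs (fun _ : T => 0%R) = 0%R.
Proof.
rewrite /rs !esum1 /=; first by rewrite subrr.
- by move=> x _; rewrite oppr0 maxxx.
- by move=> x _; rewrite maxxx.
Qed.

Lemma rs_point g s : (forall t, t != s -> g t = 0%R) -> rs g = g s.
Proof.
move=> gs.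
have E (f : T -> R) : (forall t, t != s -> f t = 0%R) -> (forall x, (0 <= f x)%R) ->
   \esum_(x in [set: T]) (f x)%:E = (f s)%:E.
  move=> fs f0; rewrite (esumID [set s] [set: T] (fun x => (f x)%:E)); last by move=> x _; rewrite lee_fin.
  rewrite setTI esum_set1 ?lee_fin// esum1 ?adde0// => x [_ /= /eqP xs].
  by rewrite fs.
rewrite /rs -/(posp g) -/(negp g) !E /=; first by have [] := pospE g s.
- by move=> t /gs; rewrite /negp => ->; rewrite oppr0 maxxx.
- exact: negp_ge0.
- by move=> t /gs; rewrite /posp => ->; rewrite maxxx.
- exact: posp_ge0.
Qed.

Lemma rsm_point g s : (forall t, t != s -> g t = 0%R) -> rsm g.
Proof.
move=> gs; rewrite /rsm (esumID [set s] [set: T] (fun x => (`|g x|)%:E)); last by move=> x _; rewrite lee_fin.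
rewrite setTI esum_set1 ?lee_fin// esum1 ?adde0 ?ltry// => x [_ /= /eqP xs].
by rewrite gs ?normr0// ; apply/eqP.
Qed.
End T.

Section Multi.
Local Open Scope ereal_scope.

Lemma esum_reindex_nn (T T' : choiceType) (e : T -> T') (a : T' -> \bar R) :
  injective e -> (forall y, ~ (exists x, e x = y) -> a y = 0) ->
  \esum_(x in [set: T]) a (e x) = \esum_(y in [set: T']) a y.
Proof.
move=> ei az; rewrite -(esum_image [set: T] e a); last by move=> x y _ _ /ei.
rewrite [LHS]esum_mkcond; apply: eq_esum => y _; case: ifPn => // /negP nin.
rewrite az // => -[x ex]; apply: nin; apply/mem_set; by exists x.
Qed.

Lemma esum_fubini_nn (T1 T2 : choiceType) (a : T1 * T2 -> \bar R) :
  (forall p, 0 <= a p) ->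
  \esum_(x in [set: T1]) \esum_(y in [set: T2]) a (x, y) = \esum_(p in [set: T1 * T2]) a p.
Proof.
move=> a0; rewrite (esum_esum (I := [set: T1]) (J := fun _ => [set: T2]) (a := fun x y => a (x, y))) //.
have -> : [set: T1] `*`` (fun _ => [set: T2]) = [set: T1 * T2].
  by apply/seteqP; split => // [[x y]].
by apply: eq_esum => -[x y].
Qed.

Lemma rs_reindex (T T' : choiceType) (e : T -> T') (g : T' -> R) :
  injective e -> (forall y, ~ (exists x, e x = y) -> g y = 0%R) ->
  rs (fun x => g (e x)) = rs g.
Proof.
move=> ei gz; rewrite /rs.
rewrite (@esum_reindex_nn _ _ e (fun y => (Num.max (g y) 0)%:E) ei); last first.
  by move=> y /gz ->; rewrite maxxx.
rewrite (@esum_reindex_nn _ _ e (fun y => (Num.max (- g y) 0)%:E) ei) //.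
by move=> y /gz ->; rewrite oppr0 maxxx.
Qed.

Lemma rsm_reindex (T T' : choiceType) (e : T -> T') (g : T' -> R) :
  injective e -> (forall y, ~ (exists x, e x = y) -> g y = 0%R) ->
  rsm g -> rsm (fun x => g (e x)).
Proof.
move=> ei gz; rewrite /rsm (@esum_reindex_nn _ _ e (fun y => `|g y|%:E) ei) //.
by move=> y /gz ->; rewrite normr0.
Qed.

Lemma esum_term_e (T : choiceType) (a : T -> \bar R) t : (forall x, 0 <= a x) ->
  a t <= \esum_(x in [set: T]) a x.
Proof.
move=> a0; apply: esum_ge; exists [set t].
  by split; [exact: finite_set1|].
by rewrite fsbig_set1.
Qed.

Lemma fub_inner (T1 T2 : choiceType) (a : T1 * T2 -> R) x :
  (forall p, (0 <= a p)%R) -> \esum_(p in [set: T1 * T2]) (a p)%:E < +oo ->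
  \esum_(y in [set: T2]) (a (x, y))%:E < +oo.
Proof.
move=> a0 fa; rewrite -esum_fubini_nn in fa; last by move=> p; rewrite lee_fin.
apply: le_lt_trans fa; apply: (@esum_term_e _ (fun x => \esum_(y in [set: T2]) (a (x, y))%:E) x).
by move=> z; apply: esum_ge0 => y _; rewrite lee_fin.
Qed.

Lemma fub_fine (T1 T2 : choiceType) (a : T1 * T2 -> R) :
  (forall p, (0 <= a p)%R) -> \esum_(p in [set: T1 * T2]) (a p)%:E < +oo ->
  \esum_(x in [set: T1]) (fine (\esum_(y in [set: T2]) (a (x, y))%:E))%:E =
  \esum_(p in [set: T1 * T2]) (a p)%:E.
Proof.
move=> a0 fa; rewrite -esum_fubini_nn; last by move=> p; rewrite lee_fin.
apply: eq_esum => x _; rewrite efin_esum //; last exact: fub_inner.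
Qed.

Lemma rsm_bound (T : choiceType) (h c : T -> R) : (forall x, `|h x| <= c x)%R ->
  \esum_(x in [set: T]) (c x)%:E < +oo -> rsm h.
Proof.
move=> hc; rewrite /rsm; apply: le_lt_trans; apply: le_esum => x _.
by rewrite lee_fin.
Qed.

Lemma rsm_fub_in (T1 T2 : choiceType) (g : T1 * T2 -> R) x :
  rsm g -> rsm (fun y => g (x, y)).
Proof. by move=> fg; apply: (@fub_inner _ _ (fun p => `|g p|%R) x) => // p. Qed.

Lemma rsm_fub_out (T1 T2 : choiceType) (g : T1 * T2 -> R) :
  rsm g -> rsm (fun x => rs (fun y => g (x, y))).
Proof.
move=> fg; apply: (@rsm_bound _ _ (fun x => fine (\esum_(y in [set: T2]) `|g (x, y)|%:E))).
  by move=> x; apply: rs_le; apply: rsm_fub_in.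
by rewrite (fub_fine (a := fun p => `|g p|%R)).
Qed.

Lemma rs_fubini (T1 T2 : choiceType) (g : T1 * T2 -> R) :
  rsm g -> rs g = rs (fun x => rs (fun y => g (x, y))).
Proof.
move=> fg.
rewrite [RHS](@rs_decomp _ _
   (fun x => fine (\esum_(y in [set: T2]) (posp g (x, y))%:E))
   (fun x => fine (\esum_(y in [set: T2]) (negp g (x, y))%:E))).
- rewrite (fub_fine (a := posp g)) ?(rsm_posp fg) //; last exact: posp_ge0.
  by rewrite (fub_fine (a := negp g)) ?(rsm_negp fg) //; exact: negp_ge0.
- by move=> x; apply: fine_ge0 => y; exact: posp_ge0.
- by move=> x; apply: fine_ge0 => y; exact: negp_ge0.
- by rewrite (fub_fine (a := posp g)) ?(rsm_posp fg) //; exact: posp_ge0.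
- by rewrite (fub_fine (a := negp g)) ?(rsm_negp fg) //; exact: negp_ge0.
- move=> x; apply: rs_decomp.
  + by move=> y; exact: posp_ge0.
  + by move=> y; exact: negp_ge0.
  + by apply: fub_inner; [exact: posp_ge0|exact: rsm_posp].
  + by apply: fub_inner; [exact: negp_ge0|exact: rsm_negp].
  + by move=> y; have [] := pospE g (x, y).
Qed.


End Multi.

Section Cx.
Local Open Scope complex_scope.
Variable T : choiceType.
Implicit Types (f g h : T -> R[i]).
Local Notation Re := complex.Re.
Local Notation Im := complex.Im.

Lemma ReD (x y : R[i]) : Re (x + y) = (Re x + Re y)%R. Proof. by case: x; case: y. Qed.
Lemma ImD (x y : R[i]) : Im (x + y) = (Im x + Im y)%R. Proof. by case: x; case: y. Qed.
Lemma ReM (x y : R[i]) : Re (x * y) = (Re x * Re y - Im x * Im y)%R.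
Proof. by case: x => a b; case: y => c d. Qed.
Lemma ImM (x y : R[i]) : Im (x * y) = (Re x * Im y + Im x * Re y)%R.
Proof. by case: x => a b; case: y => c d. Qed.

Lemma cabs_ge0 (z : R[i]) : (0 <= cabs z)%R.
Proof. by case: z => a b; rewrite /cabs /= sqrtr_ge0. Qed.

Lemma Re_le (z : R[i]) : (`|Re z| <= cabs z)%R.
Proof.
case: z => a b; rewrite /cabs /= -sqrtr_sqr ler_wsqrtr // lerDl sqr_ge0 //.
Qed.

Lemma Im_le (z : R[i]) : (`|Im z| <= cabs z)%R.
Proof.
case: z => a b; rewrite /cabs /= -sqrtr_sqr ler_wsqrtr // lerDr sqr_ge0 //.
Qed.

Lemma cabs_le (z : R[i]) : (cabs z <= `|Re z| + `|Im z|)%R.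
Proof.
case: z => a b; rewrite /cabs /=.
have h : Num.sqrt ((`|a| + `|b|)^+2) = (`|a| + `|b|)%R.
  by rewrite sqrtr_sqr ger0_norm // addr_ge0.
rewrite -[leRHS]h; apply: ler_wsqrtr.
rewrite sqrrD !real_normK ?num_real //.
have := normr_ge0 a; have := normr_ge0 b; nra.
Qed.

Lemma cabsM (z w : R[i]) : cabs (z * w) = (cabs z * cabs w)%R.
Proof. exact: ComplexField.Normc.normcM. Qed.

Lemma cabs0 : cabs (0 : R[i]) = 0%R.
Proof. exact: ComplexField.Normc.normc0. Qed.

Lemma as_Re f : abs_summable f -> rsm (fun x => Re (f x)).
Proof. by move=> fs; apply: (rsm_bound (c := fun x => cabs (f x))) => // x; apply: Re_le. Qed.

Lemma as_Im f : abs_summable f -> rsm (fun x => Im (f x)).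
Proof. by move=> fs; apply: (rsm_bound (c := fun x => cabs (f x))) => // x; apply: Im_le. Qed.

Lemma as_of f : rsm (fun x => Re (f x)) -> rsm (fun x => Im (f x)) -> abs_summable f.
Proof.
move=> h1 h2; rewrite /abs_summable.
apply: (le_lt_trans (y := \esum_(x in [set: T]) (`|Re (f x)| + `|Im (f x)|)%:E)).
  by apply: le_esum => x _; rewrite lee_fin cabs_le.
rewrite esumDr ?lte_add_pinfty //.
Qed.

Lemma as_bound h (c : T -> R) : (forall x, cabs (h x) <= c x)%R ->
  (\esum_(x in [set: T]) (c x)%:E < +oo)%E -> abs_summable h.
Proof.
move=> hc; rewrite /abs_summable; apply: le_lt_trans; apply: le_esum => x _.
by rewrite lee_fin.
Qed.

Lemma as_le f h : (forall x, cabs (h x) <= cabs (f x))%R -> abs_summable f -> abs_summable h.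
Proof. by move=> hf; apply: as_bound. Qed.

Lemma as_add f g : abs_summable f -> abs_summable g -> abs_summable (fun x => f x + g x).
Proof.
move=> hf hg; apply: as_of.
  rewrite (_ : (fun x => _) = (fun x => Re (f x) + Re (g x))%R); last by apply: funext => x; rewrite ReD.
  by apply: rsm_add; [exact: as_Re|exact: as_Re].
rewrite (_ : (fun x => _) = (fun x => Im (f x) + Im (g x))%R); last by apply: funext => x; rewrite ImD.
by apply: rsm_add; [exact: as_Im|exact: as_Im].
Qed.

Lemma as_scale (a : R[i]) f : abs_summable f -> abs_summable (fun x => a * f x).
Proof.
move=> hf; apply: (as_bound (c := fun x => cabs a * cabs (f x))%R).
  by move=> x; rewrite cabsM.
by apply: esumZr => //; [exact: cabs_ge0|move=> x; exact: cabs_ge0].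
Qed.

Lemma csumE f : csum f = (rs (fun x => Re (f x)) +i* rs (fun x => Im (f x)))%C.
Proof. by []. Qed.

Lemma csumD f g : abs_summable f -> abs_summable g ->
  csum (fun x => f x + g x) = csum f + csum g.
Proof.
move=> hf hg; rewrite !csumE.
rewrite (_ : (fun x => Re (_ + _)) = (fun x => Re (f x) + Re (g x))%R); last by apply: funext => x; rewrite ReD.
rewrite (_ : (fun x => Im (_ + _)) = (fun x => Im (f x) + Im (g x))%R); last by apply: funext => x; rewrite ImD.
by rewrite !rsD ?as_Re ?as_Im.
Qed.

Lemma csumZ (a : R[i]) f : abs_summable f -> csum (fun x => a * f x) = a * csum f.
Proof.
move=> hf; rewrite !csumE.
rewrite (_ : (fun x => Re (_ * _)) = (fun x => Re a * Re (f x) + (- Im a) * Im (f x))%R); last first.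
  by apply: funext => x; rewrite ReM mulNr.
rewrite (_ : (fun x => Im (_ * _)) = (fun x => Re a * Im (f x) + Im a * Re (f x))%R); last first.
  by apply: funext => x; rewrite ImM.
rewrite !rsD ?rsm_scale ?as_Re ?as_Im // !rsZ ?as_Re ?as_Im //.
by case: a => a b /=; congr (_ +i* _); ring.
Qed.

Lemma csum0 : csum (fun _ : T => 0 : R[i]) = 0.
Proof. by rewrite csumE /= rs0. Qed.

Lemma csum_point f s : (forall t, t != s -> f t = 0) -> csum f = f s.
Proof.
move=> fs; rewrite csumE !(rs_point (s := s)); first by case: (f s).
- by move=> t /fs ->.
- by move=> t /fs ->.
Qed.

Lemma as_point f s : (forall t, t != s -> f t = 0) -> abs_summable f.
Proof.
move=> fs; apply: as_of; apply: (rsm_point (s := s)) => t /fs ->//.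
Qed.

Lemma csum_le f : abs_summable f ->
  (cabs (csum f) <= 2 * fine (\esum_(x in [set: T]) (cabs (f x))%:E))%R.
Proof.
move=> hf; rewrite csumE; apply: (le_trans (cabs_le _)) => /=.
have h1 := rs_le (as_Re hf); have h2 := rs_le (as_Im hf).
have e1 : (fine (\esum_(x in [set: T]) `|Re (f x)|%:E) <= fine (\esum_(x in [set: T]) (cabs (f x))%:E))%R.
  apply: fine_le; rewrite ?ge0_fin_numE //; try (apply: esum_ge0 => x _; rewrite lee_fin ?cabs_ge0 //).
  - exact: as_Re.
  - by apply: le_esum => x _; rewrite lee_fin Re_le.
have e2 : (fine (\esum_(x in [set: T]) `|Im (f x)|%:E) <= fine (\esum_(x in [set: T]) (cabs (f x))%:E))%R.
  apply: fine_le; rewrite ?ge0_fin_numE //; try (apply: esum_ge0 => x _; rewrite lee_fin ?cabs_ge0 //).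
  - exact: as_Im.
  - by apply: le_esum => x _; rewrite lee_fin Im_le.
lra.
Qed.

End Cx.

Section CxMulti.
Local Open Scope complex_scope.
Local Notation Re := complex.Re.
Local Notation Im := complex.Im.

Lemma esum_fiber_nn (T S : choiceType) (p : T -> S) (a : T -> \bar R) :
  (forall t, (0 <= a t)%E) ->
  \esum_(s in [set: S]) \esum_(t in [set: T]) (if p t == s then a t else 0%E) =
  \esum_(t in [set: T]) a t.
Proof.
move=> a0.
rewrite (esum_fubini_nn (a := fun q : S * T => if p q.2 == q.1 then a q.2 else 0%E)); last first.
  by move=> [s t] /=; case: ifP.
rewrite -(@esum_reindex_nn _ _ (fun t => (p t, t)) (fun q : S * T => if p q.2 == q.1 then a q.2 else 0%E)).
- by apply: eq_esum => t _ /=; rewrite eqxx.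
- by move=> x y [].
- move=> [s t] /= H; case: eqP => // e; exfalso; apply: H; exists t; by rewrite e.
Qed.

Lemma as_reindex (T T' : choiceType) (e : T -> T') (f : T' -> R[i]) :
  injective e -> (forall y, ~ (exists x, e x = y) -> f y = 0) ->
  abs_summable (fun x => f (e x)) <-> abs_summable f.
Proof.
move=> ei fz; rewrite /abs_summable (@esum_reindex_nn _ _ e (fun y => (cabs (f y))%:E) ei) //.
by move=> y /fz ->; rewrite cabs0.
Qed.

Lemma csum_reindex (T T' : choiceType) (e : T -> T') (f : T' -> R[i]) :
  injective e -> (forall y, ~ (exists x, e x = y) -> f y = 0) ->
  csum (fun x => f (e x)) = csum f.
Proof.
move=> ei fz; rewrite !csumE (rs_reindex (g := fun y => Re (f y))) //; last by move=> y /fz ->.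
by rewrite (rs_reindex (g := fun y => Im (f y))) // => y /fz ->.
Qed.

Lemma csum_fubini (T1 T2 : choiceType) (g : T1 * T2 -> R[i]) :
  abs_summable g -> csum g = csum (fun x => csum (fun y => g (x, y))).
Proof.
move=> hg; rewrite !csumE (rs_fubini (as_Re hg)) (rs_fubini (as_Im hg)) //.
Qed.

Lemma as_fub_in (T1 T2 : choiceType) (g : T1 * T2 -> R[i]) x :
  abs_summable g -> abs_summable (fun y => g (x, y)).
Proof.
move=> hg; apply: as_of.
  exact: (rsm_fub_in x (as_Re hg)).
exact: (rsm_fub_in x (as_Im hg)).
Qed.

Lemma as_fub_out (T1 T2 : choiceType) (g : T1 * T2 -> R[i]) :
  abs_summable g -> abs_summable (fun x => csum (fun y => g (x, y))).
Proof.
move=> hg; apply: as_of.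
  exact: (rsm_fub_out (as_Re hg)).
exact: (rsm_fub_out (as_Im hg)).
Qed.

Lemma csum_fiber (T S : choiceType) (p : T -> S) (f : T -> R[i]) :
  abs_summable f ->
  csum f = csum (fun s => csum (fun t => if p t == s then f t else 0)).
Proof.
move=> hf.
pose k := fun q : S * T => if p q.2 == q.1 then f q.2 else 0.
have ei : injective (fun t => (p t, t)) by move=> x y [].
have kz : forall y, ~ (exists x, (p x, x) = y) -> k y = 0.
  move=> [s t] H; rewrite /k /=; case: eqP => // e; exfalso; apply: H; exists t; by rewrite e.
have ke : (fun t => k (p t, t)) = f by apply: funext => t; rewrite /k /= eqxx.
have hk : abs_summable k by rewrite -(as_reindex ei kz) ke.
by rewrite -{1}ke (csum_reindex ei kz) (csum_fubini hk).
Qed.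

Lemma as_fiber_out (T S : choiceType) (p : T -> S) (f : T -> R[i]) :
  abs_summable f ->
  abs_summable (fun s => csum (fun t => if p t == s then f t else 0)).
Proof.
move=> hf.
pose k := fun q : S * T => if p q.2 == q.1 then f q.2 else 0.
have ei : injective (fun t => (p t, t)) by move=> x y [].
have kz : forall y, ~ (exists x, (p x, x) = y) -> k y = 0.
  move=> [s t] H; rewrite /k /=; case: eqP => // e; exfalso; apply: H; exists t; by rewrite e.
have ke : (fun t => k (p t, t)) = f by apply: funext => t; rewrite /k /= eqxx.
have hk : abs_summable k by rewrite -(as_reindex ei kz) ke.
exact: (as_fub_out hk).
Qed.

Lemma esumZR (T : choiceType) c (a : T -> R) : (0 <= c)%R -> (forall x, 0 <= a x)%R ->
  \esum_(x in [set: T]) (c * a x)%:E = (c%:E * \esum_(x in [set: T]) (a x)%:E)%E.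
Proof.
move=> c0 a0; rewrite -esumZ //; try (by move=> x; rewrite lee_fin).

Qed.

Lemma esum_prod (T1 T2 : choiceType) (a : T1 -> R) (b : T2 -> R) :
  (forall x, 0 <= a x)%R -> (forall y, 0 <= b y)%R ->
  (\esum_(x in [set: T1]) (a x)%:E < +oo)%E -> (\esum_(y in [set: T2]) (b y)%:E < +oo)%E ->
  \esum_(p in [set: T1 * T2]) (a p.1 * b p.2)%:E =
  (fine (\esum_(x in [set: T1]) (a x)%:E) * fine (\esum_(y in [set: T2]) (b y)%:E))%:E.
Proof.
move=> a0 b0 fa fb.
rewrite -(esum_fubini_nn (a := fun p : T1 * T2 => (a p.1 * b p.2)%:E)); last first.
  by move=> p; rewrite lee_fin mulr_ge0.
rewrite (eq_esum (b := fun x => (fine (\esum_(y in [set: T2]) (b y)%:E) * a x)%:E)); last first.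
  move=> x _ /=; rewrite esumZR // -(efin_esum b0 fb) -EFinM mulrC //.
rewrite esumZR //; try exact: fine_ge0.
by rewrite -(efin_esum a0 fa) -EFinM mulrC.
Qed.

Lemma as_prod (T1 T2 : choiceType) (f : T1 -> R[i]) (g : T2 -> R[i]) :
  abs_summable f -> abs_summable g -> abs_summable (fun p => f p.1 * g p.2).
Proof.
move=> hf hg; rewrite /abs_summable.
rewrite (eq_esum (b := fun p : T1 * T2 => (cabs (f p.1) * cabs (g p.2))%:E)); last first.
  by move=> p _; rewrite cabsM.
by rewrite (esum_prod (a := fun x => cabs (f x)) (b := fun y => cabs (g y))) ?ltry //; move=> x; exact: cabs_ge0.
Qed.

Lemma as_mulb (T : choiceType) (F K : T -> R[i]) M :
  abs_summable F -> (forall x, cabs (K x) <= M)%R -> abs_summable (fun x => F x * K x).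
Proof.
move=> hF hK; apply: (as_bound (c := fun x => Num.max M 0 * cabs (F x))%R).
  move=> x; rewrite cabsM [X in (_ <= X)%R]mulrC; apply: ler_wpM2l; first exact: cabs_ge0.
  by apply: le_trans (hK x) _; rewrite le_max lexx.
apply: esumZr => //; first by rewrite le_max lexx orbT.
by move=> x; exact: cabs_ge0.
Qed.




End CxMulti.
End Gen.

End HelpersB.
Import HelpersB.

Module HelpersM.
Set Implicit Arguments.
Unset Strict Implicit.
Local Open Scope ring_scope.
Local Open Scope classical_set_scope.
Local Open Scope complex_scope.

Section Main.
Variable R : realType.
Local Notation CC := (R[i]).
Implicit Types (f g h c : Cu2 -> CC).

Definition tauo (o : option Cu2) : CC := if istauo o then 1 else 0.
Definition Ko (K : Cu2 -> CC) (o : option Cu2) : CC := if o is Some w then K w else 0.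
Definition pi' (p : Cu2 * Cu2) : Cu2 := odflt Cu2_e (Cu2_mul p.1 p.2).

Lemma tau_wE w : tau_w R w = tauo (Some w). Proof. by []. Qed.

Lemma cabs1 : cabs (1 : CC) = 1%R.
Proof. exact: ComplexField.Normc.normc1. Qed.

Lemma cabs_tauo o : (cabs (tauo o) <= 1)%R.
Proof. by rewrite /tauo; case: ifP; rewrite ?cabs1 ?cabs0. Qed.

Lemma Ko_bound K M o : (forall w, cabs (K w) <= M)%R -> (cabs (Ko K o) <= Num.max M 0)%R.
Proof.
move=> hK; case: o => [w|]; rewrite /Ko; last by rewrite cabs0 le_max lexx orbT.
by apply: le_trans (hK w) _; rewrite le_max lexx.
Qed.

Lemma inA_tau f : inA f -> abs_summable (fun w => f w * tau_w R w).
Proof. by move=> hf; apply: (as_mulb (M := 1%R)) => // w; rewrite tau_wE; exact: cabs_tauo. Qed.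

Lemma as_conv_fam f g w : inA f -> inA g ->
  abs_summable (fun p : Cu2 * Cu2 => if Cu2_mul p.1 p.2 == Some w then f p.1 * g p.2 else 0).
Proof.
move=> hf hg; apply: (as_le (f := fun p : Cu2 * Cu2 => f p.1 * g p.2)); last exact: as_prod.
by move=> p; case: ifP; rewrite ?cabs0 ?cabs_ge0.
Qed.

Lemma conv_pair f g K M : inA f -> inA g -> (forall w, cabs (K w) <= M)%R ->
  csum (fun w => conv f g w * K w) =
  csum (fun p : Cu2 * Cu2 => f p.1 * g p.2 * Ko K (Cu2_mul p.1 p.2)).
Proof.
move=> hf hg hK.
have hF : abs_summable (fun p : Cu2 * Cu2 => f p.1 * g p.2 * Ko K (Cu2_mul p.1 p.2)).
  apply: (as_mulb (M := Num.max M 0)); first exact: as_prod.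
  by move=> p; exact: Ko_bound.
rewrite (csum_fiber pi' hF); congr csum; apply: funext => w.
rewrite /conv mulrC -csumZ; last exact: as_conv_fam.
congr csum; apply: funext => p; rewrite /pi'.
case: (Cu2_mul p.1 p.2) => [w'|] /=; last by rewrite !mulr0 -?mulrA ?mul0r; case: ifP.
have -> : (Some w' == Some w) = (w' == w) by [].
case: eqP => [->|_]; [ring|by rewrite mulr0].
Qed.

Lemma tau_conv f g : inA f -> inA g ->
  tauA (conv f g) = csum (fun p : Cu2 * Cu2 => f p.1 * g p.2 * tauo (Cu2_mul p.1 p.2)).
Proof.
move=> hf hg; rewrite /tauA (conv_pair (M := 1%R)) //; last by move=> w; rewrite tau_wE; exact: cabs_tauo.
by congr csum; apply: funext => p; case: (Cu2_mul p.1 p.2).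
Qed.

Lemma trace f g : inA f -> inA g -> tauA (conv f g) = tauA (conv g f).
Proof.
move=> hf hg; rewrite !tau_conv //.
pose e := fun p : Cu2 * Cu2 => (p.2, p.1).
have ei : injective e by move=> [a b] [c d] [-> ->].
rewrite -(csum_reindex (e := e) (f := fun p : Cu2 * Cu2 => g p.1 * f p.2 * tauo (Cu2_mul p.1 p.2))) //.
  congr csum; apply: funext => -[u v] /=; rewrite /tauo istau_comm; ring.
by move=> [a b] H; exfalso; apply: H; exists (b, a).
Qed.


Lemma l1norm_ge0 f : (0 <= l1norm f)%R.
Proof. by apply: fine_ge0 => w; exact: cabs_ge0. Qed.

Lemma conv_bound f g : inA f -> inA g ->
  (\esum_(w in [set: Cu2]) (cabs (conv f g w))%:E <= (2 * (l1norm f * l1norm g))%:E)%E.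
Proof.
move=> hf hg.
pose a := fun w (p : Cu2 * Cu2) => if pi' p == w then cabs (f p.1 * g p.2) else 0%R.
have a0 w p : (0 <= a w p)%R by rewrite /a; case: ifP => _ //; exact: cabs_ge0.
have hp : (\esum_(p in [set: Cu2 * Cu2]) (cabs (f p.1 * g p.2))%:E < +oo)%E.
  exact: (as_prod hf hg).
have fin w : (\esum_(p in [set: Cu2 * Cu2]) (a w p)%:E < +oo)%E.
  apply: esum_lt hp => p; rewrite a0 /= /a; case: ifP => _ //; exact: cabs_ge0.
have step1 w : (cabs (conv f g w) <= 2 * fine (\esum_(p in [set: Cu2 * Cu2]) (a w p)%:E))%R.
  apply: le_trans (csum_le (as_conv_fam w hf hg)) _.
  apply: ler_wpM2l => //; apply: fine_le.
  - rewrite ge0_fin_numE; last by apply: esum_ge0 => p _; rewrite lee_fin cabs_ge0.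
    exact: (as_conv_fam w hf hg).
  - by rewrite ge0_fin_numE ?fin //; apply: esum_ge0 => p _; rewrite lee_fin.
  - apply: le_esum => p _; rewrite lee_fin /a /pi'.
    case: (Cu2_mul p.1 p.2) => [w'|].
      have -> : (Some w' == Some w) = (w' == w) by [].
      have -> : odflt Cu2_e (Some w') = w' by [].
      by case: ifP => _; rewrite ?cabs0.
    have -> : (None == Some w) = false by [].
    by rewrite cabs0; case: ifP => _ //; exact: cabs_ge0.
apply: (le_trans (y := \esum_(w in [set: Cu2])
   (2 * fine (\esum_(p in [set: Cu2 * Cu2]) (a w p)%:E))%:E)%E).
  by apply: le_esum => w _; rewrite lee_fin.
rewrite esumZR //; last by move=> w; apply: fine_ge0.
rewrite (eq_esum (b := fun w => \esum_(p in [set: Cu2 * Cu2])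
   (if pi' p == w then (cabs (f p.1 * g p.2))%:E else 0%E))); last first.
  move=> w _; rewrite efin_esum //; apply: eq_esum => p _; rewrite /a; by case: ifP.
rewrite esum_fiber_nn; last by move=> p; rewrite lee_fin cabs_ge0.
rewrite (eq_esum (b := fun p : Cu2 * Cu2 => (cabs (f p.1) * cabs (g p.2))%:E)); last first.
  by move=> p _; rewrite cabsM.
rewrite (esum_prod (a := fun x => cabs (f x)) (b := fun y => cabs (g y))) //;
  try (by move=> x; exact: cabs_ge0).

Qed.

Lemma inA_conv f g : inA f -> inA g -> inA (conv f g).
Proof.
move=> hf hg; rewrite /inA /abs_summable; apply: le_lt_trans (conv_bound hf hg) _.
exact: ltry.
Qed.

Lemma l1norm_conv f g : inA f -> inA g ->
  (l1norm (conv f g) <= 2 * (l1norm f * l1norm g))%R.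
Proof.
move=> hf hg; rewrite /l1norm.
have := conv_bound hf hg; set E := esum _ _ => hE.
have E0 : (0 <= E)%E by apply: esum_ge0 => w _; rewrite lee_fin cabs_ge0.
have Ef : E \is a fin_num by rewrite ge0_fin_numE // (le_lt_trans hE) ?ltry.
by rewrite -lee_fin fineK.
Qed.

Definition mulo' := mulo.

Lemma G_bound f x : inA f ->
  (cabs (csum (fun z => f z * tauo (Cu2_mul x z))) <= 2 * l1norm f)%R.
Proof.
move=> hf.
have hs : abs_summable (fun z => f z * tauo (Cu2_mul x z)).
  by apply: (as_mulb (M := 1%R)) => // z; exact: cabs_tauo.
apply: le_trans (csum_le hs) _; apply: ler_wpM2l => //; apply: fine_le.
- by rewrite ge0_fin_numE //; apply: esum_ge0 => z _; rewrite lee_fin cabs_ge0.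
- by rewrite ge0_fin_numE //; apply: esum_ge0 => z _; rewrite lee_fin cabs_ge0.
- apply: le_esum => z _; rewrite lee_fin cabsM -[leRHS]mulr1.
  by apply: ler_wpM2l; [exact: cabs_ge0|exact: cabs_tauo].
Qed.

Lemma mul_assoc3 x y z : mulo (Cu2_mul x y) (Some z) = mulo (Some x) (Cu2_mul y z).
Proof. exact: (mulo_assoc (Some x) (Some y) (Some z)). Qed.

Lemma tau_assoc c a f : inA c -> inA a -> inA f ->
  tauA (conv (conv c a) f) = tauA (conv c (conv a f)).
Proof.
move=> hc ha hf.
have hca := inA_conv hc ha; have haf := inA_conv ha hf.
pose Phi := fun t : (Cu2 * Cu2) * Cu2 =>
  c t.1.1 * a t.1.2 * f t.2 * tauo (mulo (Cu2_mul t.1.1 t.1.2) (Some t.2)).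
pose Psi := fun t : Cu2 * (Cu2 * Cu2) =>
  c t.1 * (a t.2.1 * f t.2.2) * tauo (mulo (Some t.1) (Cu2_mul t.2.1 t.2.2)).
have hPhi : abs_summable Phi.
  apply: (as_mulb (F := fun t : (Cu2 * Cu2) * Cu2 => c t.1.1 * a t.1.2 * f t.2) (M := 1%R)).
    exact: (as_prod (as_prod hc ha) hf).
  by move=> t; exact: cabs_tauo.
have hPsi : abs_summable Psi.
  apply: (as_mulb (F := fun t : Cu2 * (Cu2 * Cu2) => c t.1 * (a t.2.1 * f t.2.2)) (M := 1%R)).
    exact: (as_prod hc (as_prod ha hf)).
  by move=> t; exact: cabs_tauo.
have L : tauA (conv (conv c a) f) = csum Phi.
  rewrite tau_conv //.
  have hs : abs_summable (fun p : Cu2 * Cu2 => conv c a p.1 * f p.2 * tauo (Cu2_mul p.1 p.2)).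
    apply: (as_mulb (M := 1%R)); first exact: as_prod.
    by move=> p; exact: cabs_tauo.
  rewrite (csum_fubini hs) (csum_fubini hPhi).
  rewrite (_ : (fun x => csum (fun y => conv c a (x, y).1 * f (x, y).2 * tauo (Cu2_mul (x, y).1 (x, y).2)))
     = (fun x => conv c a x * csum (fun z => f z * tauo (Cu2_mul x z)))); last first.
    apply: funext => x; rewrite -csumZ; last first.
      by apply: (as_mulb (M := 1%R)) => // z; exact: cabs_tauo.
    by congr csum; apply: funext => z /=; rewrite mulrA.
  rewrite (conv_pair (K := fun x => csum (fun z => f z * tauo (Cu2_mul x z))) (M := 2 * l1norm f)) //;
    last by move=> x; exact: G_bound.
  have hs2 : abs_summable (fun p : Cu2 * Cu2 => c p.1 * a p.2 *
      Ko (fun x => csum (fun z => f z * tauo (Cu2_mul x z))) (Cu2_mul p.1 p.2)).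
    apply: (as_mulb (M := Num.max (2 * l1norm f) 0)); first exact: as_prod.
    by move=> p; apply: Ko_bound => x; exact: G_bound.
  congr csum; apply: funext => -[x y] /=.
  case E: (Cu2_mul x y) => [w|] /=.
    rewrite -csumZ; last by apply: (as_mulb (M := 1%R)) => // z; exact: cabs_tauo.
    congr csum; apply: funext => z; rewrite /Phi /= E /=; ring.
  rewrite mulr0 (_ : (fun z => _) = (fun _ => 0)) ?csum0 //.
  by apply: funext => z; rewrite /Phi /= E /tauo /=; ring.
have Rr : tauA (conv c (conv a f)) = csum Psi.
  rewrite tau_conv //.
  have hs : abs_summable (fun p : Cu2 * Cu2 => c p.1 * conv a f p.2 * tauo (Cu2_mul p.1 p.2)).
    apply: (as_mulb (M := 1%R)); first exact: as_prod.
    by move=> p; exact: cabs_tauo.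
  rewrite (csum_fubini hs) (csum_fubini hPsi); congr csum; apply: funext => x /=.
  rewrite (_ : csum _ = c x * csum (fun q => conv a f q * tauo (Cu2_mul x q))); last first.
    rewrite -csumZ; last by apply: (as_mulb (M := 1%R)) => // q; exact: cabs_tauo.
    by congr csum; apply: funext => q; rewrite mulrA.
  rewrite (conv_pair (K := fun q => tauo (Cu2_mul x q)) (M := 1%R)) //; last by move=> q; exact: cabs_tauo.
  rewrite -csumZ; last first.
    apply: (as_mulb (M := Num.max 1 0)%R); first exact: as_prod.
    by move=> p; apply: Ko_bound => q; exact: cabs_tauo.
  congr csum; apply: funext => -[y z]; rewrite /Psi /=.
  case: (Cu2_mul y z) => [w|] /=; first by rewrite mulrA.
  by rewrite /tauo /=; ring.
rewrite L Rr -(csum_reindex (e := fun t : (Cu2 * Cu2) * Cu2 => (t.1.1, (t.1.2, t.2))) (f := Psi)).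
- congr csum; apply: funext => -[[x y] z]; rewrite /Phi /Psi /= mul_assoc3; ring.
- by move=> [[x1 y1] z1] [[x2 y2] z2] /= [-> -> ->].
- by move=> [x [y z]] H; exfalso; apply: H; exists ((x, y), z).
Qed.

Lemma tauA_D f g : inA f -> inA g -> tauA (fun w => f w + g w) = tauA f + tauA g.
Proof.
move=> hf hg; rewrite /tauA -csumD; try exact: inA_tau.
by congr csum; apply: funext => w; rewrite mulrDl.
Qed.

Lemma tauA_Z a f : inA f -> tauA (fun w => a * f w) = a * tauA f.
Proof.
move=> hf; rewrite /tauA -csumZ; last exact: inA_tau.
by congr csum; apply: funext => w; rewrite mulrA.
Qed.

Lemma tauA_bound f : inA f -> (cabs (tauA f) <= 2 * l1norm f)%R.
Proof.
move=> hf; apply: le_trans (csum_le (inA_tau hf)) _; apply: ler_wpM2l => //; apply: fine_le.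
- by rewrite ge0_fin_numE //; [exact: inA_tau|apply: esum_ge0 => z _; rewrite lee_fin cabs_ge0].
- by rewrite ge0_fin_numE //; apply: esum_ge0 => z _; rewrite lee_fin cabs_ge0.
- apply: le_esum => z _; rewrite lee_fin cabsM -[leRHS]mulr1.
  by apply: ler_wpM2l; [exact: cabs_ge0|rewrite tau_wE; exact: cabs_tauo].
Qed.

Lemma inA_plus f g : inA f -> inA g -> inA (plusL1 f g).
Proof. exact: as_add. Qed.

Lemma inA_scale a f : inA f -> inA (scaleL1 a f).
Proof. exact: as_scale. Qed.

Lemma minusE f g : minusL1 f g = plusL1 f (scaleL1 (-1) g).
Proof. by apply: funext => w; rewrite /minusL1 /plusL1 /scaleL1 mulN1r. Qed.

Lemma inA_minus f g : inA f -> inA g -> inA (minusL1 f g).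
Proof. by move=> hf hg; rewrite minusE; apply: inA_plus => //; apply: inA_scale. Qed.

Lemma inA_delta s : inA (delta R s).
Proof. by apply: (as_point (s := s)) => t; rewrite /delta => /negPf ->. Qed.

Lemma tauA_minus f g : inA f -> inA g -> tauA (minusL1 f g) = tauA f - tauA g.
Proof.
move=> hf hg; rewrite minusE /plusL1 /scaleL1 tauA_D ?tauA_Z ?mulN1r //.
exact: inA_scale.
Qed.

Lemma plus_minus f g : plusL1 (minusL1 f g) g = f.
Proof. by apply: funext => w; rewrite /plusL1 /minusL1 subrK. Qed.

Definition a1 : Cu2 := ([:: l1], [:: l1]).
Definition a2 : Cu2 := ([:: l2], [:: l2]).

Lemma tau_split u : tauo (Some u) = tauo (Cu2_mul u a1) + tauo (Cu2_mul u a2).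
Proof.
have [e ne] := istau_split u; rewrite /tauo /= e /a1 /a2 /l1 /l2.
move: ne; case: istauo; case: istauo => //= _; by rewrite ?addr0 ?add0r.
Qed.

Lemma tau_e u : tauo (Cu2_mul u Cu2_e) = tauo (Some u).
Proof. by case: u => mu [|j nu]; rewrite /tauo /Cu2_e /= ?cats0. Qed.

Lemma inA_f0 : inA (f0 R).
Proof. by rewrite /f0; apply: inA_minus; [apply: inA_minus|]; apply: inA_delta. Qed.

Lemma tauA_f0 : tauA (f0 R) = 0.
Proof.
rewrite /tauA (_ : (fun w => _) = (fun _ => 0)) ?csum0 //; apply: funext => w.
rewrite /f0 /minusL1 /delta tau_wE /tauo.
case: (boolP (istauo (Some w))) => h; last by rewrite mulr0.
have [ne1 ne2 ne3] : [/\ w != Cu2_e, w != ([:: l1], [:: l1]) & w != ([:: l2], [:: l2])].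
  by split; apply/eqP => ew; move: h; rewrite ew.
by rewrite (negPf ne1) (negPf ne2) (negPf ne3) !subr0 mul0r.
Qed.

Lemma csum_pt (s : Cu2) (K : CC) : csum (fun v => if v == s then K else 0) = K.
Proof. by rewrite (csum_point (s := s)) ?eqxx // => t /negPf ->. Qed.

Lemma as_pt (s : Cu2) (K : CC) : abs_summable (fun v => if v == s then K else 0).
Proof. by apply: (as_point (s := s)) => t /negPf ->. Qed.

Lemma tauA_conv_f0 c : inA c -> tauA (conv c (f0 R)) = 0.
Proof.
move=> hc; rewrite tau_conv //; last exact: inA_f0.
have hs : abs_summable (fun p : Cu2 * Cu2 => c p.1 * f0 R p.2 * tauo (Cu2_mul p.1 p.2)).
  apply: (as_mulb (M := 1%R)); first by apply: as_prod => //; exact: inA_f0.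
  by move=> p; exact: cabs_tauo.
rewrite (csum_fubini hs) (_ : (fun x => _) = (fun _ => 0)) ?csum0 //.
apply: funext => u /=.
pose k1 := c u * tauo (Cu2_mul u Cu2_e).
pose k2 := - (c u * tauo (Cu2_mul u a1)).
pose k3 := - (c u * tauo (Cu2_mul u a2)).
rewrite (_ : (fun v => _) = (fun v => ((if v == Cu2_e then k1 else 0) + (if v == a1 then k2 else 0))
     + (if v == a2 then k3 else 0))); last first.
  apply: funext => v; rewrite /f0 /minusL1 /delta /k1 /k2 /k3 /a1 /a2.
  case: (eqVneq v Cu2_e) => [->|n1] /=; first by rewrite !subr0 !addr0 mulr1.
  case: (eqVneq v ([:: l1], [:: l1])) => [->|n2] /=; first ring.
  case: (eqVneq v ([:: l2], [:: l2])) => [->|n3] /=; first ring.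
  by rewrite !subr0 !mulr0 mul0r !addr0.
rewrite (csumD (as_add (as_pt Cu2_e k1) (as_pt a1 k2)) (as_pt a2 k3)).
rewrite (csumD (as_pt Cu2_e k1) (as_pt a1 k2)).
rewrite !csum_pt /k1 /k2 /k3 tau_e (tau_split u); ring.
Qed.

Lemma conv_plus c f g : inA c -> inA f -> inA g ->
  conv c (plusL1 f g) = plusL1 (conv c f) (conv c g).
Proof.
move=> hc hf hg; apply: funext => w; rewrite /conv /plusL1 -csumD; try exact: as_conv_fam.
by congr csum; apply: funext => p; case: ifP => _; rewrite ?mulrDr ?addr0.
Qed.

Lemma conv_scale c a f : inA c -> inA f -> conv c (scaleL1 a f) = scaleL1 a (conv c f).
Proof.
move=> hc hf; apply: funext => w; rewrite /conv /scaleL1 -csumZ; last exact: as_conv_fam.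
by congr csum; apply: funext => p; case: ifP => _; [ring|rewrite mulr0].
Qed.

Lemma conv_zero c : conv c (zeroL1 R) = zeroL1 R.
Proof.
apply: funext => w; rewrite /conv (_ : (fun p => _) = (fun _ => 0)) ?csum0 //.
by apply: funext => p; case: ifP => _; rewrite /zeroL1 ?mulr0.
Qed.

Lemma inA_zero : inA (zeroL1 R).
Proof. by apply: (as_point (s := Cu2_e)). Qed.

Lemma tauA_zero : tauA (zeroL1 R) = 0.
Proof.
rewrite /tauA (_ : (fun w => _) = (fun _ => 0)) ?csum0 //.
by apply: funext => w; rewrite /zeroL1 mul0r.
Qed.

Lemma small (z : CC) (K : R) : (0 <= K)%R ->
  (forall eps : R, (0 < eps)%R -> (cabs z <= K * eps)%R) -> z = 0.
Proof.
move=> K0 H; case: (eqVneq z 0) => // nz; exfalso.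
have cz : (0 < cabs z)%R.
  rewrite lt_def cabs_ge0 andbT; apply/eqP => e; move: nz.
  by rewrite (ComplexField.Normc.eq0_normc e) eqxx.
have e0 : (0 < cabs z / (K + 1))%R by rewrite divr_gt0 // ltr_wpDl.
have := H _ e0.
have E : (cabs z / (K + 1) * (K + 1) = cabs z)%R.
  by rewrite mulfVK // lt0r_neq0 // ltr_wpDl.
set e := (cabs z / (K + 1))%R in e0 E *; nra.
Qed.

Definition Iset : set (Cu2 -> CC) :=
  fun f => [/\ inA f, tauA f = 0 & forall c, inA c -> tauA (conv c f) = 0].

Lemma I_f0 : Iset (f0 R).
Proof. split; [exact: inA_f0|exact: tauA_f0|exact: tauA_conv_f0]. Qed.

Lemma I_closed : closed_ideal Iset.
Proof.
split; first by move=> f [].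
split.
- split; [exact: inA_zero|exact: tauA_zero|move=> c hc; rewrite conv_zero; exact: tauA_zero].
- move=> f g [hf tf cf] [hg tg cg]; split; first exact: (inA_plus hf hg).
  + by rewrite /plusL1 tauA_D // tf tg addr0.
  + move=> c hc; rewrite conv_plus // /plusL1 (tauA_D (inA_conv hc hf) (inA_conv hc hg)).
    by rewrite cf // cg // addr0.
- move=> a f [hf tf cf]; split; first exact: (inA_scale a hf).
  + by rewrite /scaleL1 tauA_Z // tf mulr0.
  + move=> c hc; rewrite conv_scale // /scaleL1 (tauA_Z a (inA_conv hc hf)).
    by rewrite cf // mulr0.
- move=> a f ha [hf tf cf]; split; split.
  + exact: (inA_conv ha hf).
  + exact: cf.
  + move=> c hc; rewrite -tau_assoc //; apply: cf; exact: (inA_conv hc ha).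
  + exact: (inA_conv hf ha).
  + by rewrite trace // cf.
  + move=> c hc; rewrite (trace hc (inA_conv hf ha)) tau_assoc //.
    rewrite (trace hf (inA_conv ha hc)).
    by apply: cf; apply: (inA_conv ha hc).
- move=> f hf H; split => //.
  + apply: (small (K := 2%R)) => // eps e0.
    have [g [hg tg cg] ng] := H eps e0.
    have -> : tauA f = tauA (minusL1 f g) by rewrite tauA_minus // tg subr0.
    apply: le_trans (tauA_bound (inA_minus hf hg)) _.
    by rewrite ler_pM2l // ltW.
  + move=> c hc; apply: (small (K := 4 * l1norm c)%R).
      by rewrite mulr_ge0 // l1norm_ge0.
    move=> eps e0; have [g [hg tg cg] ng] := H eps e0.
    have -> : tauA (conv c f) = tauA (conv c (minusL1 f g)).
      rewrite -{1}(plus_minus f g) (conv_plus hc (inA_minus hf hg) hg) /plusL1.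
      rewrite (tauA_D (inA_conv hc (inA_minus hf hg)) (inA_conv hc hg)).
      by rewrite cg // addr0.
    apply: le_trans (tauA_bound (inA_conv hc (inA_minus hf hg))) _.
    apply: le_trans (_ : _ <= 2 * (2 * (l1norm c * l1norm (minusL1 f g))))%R _.
      by rewrite ler_pM2l //; apply: l1norm_conv => //; apply: inA_minus.
    have := l1norm_ge0 c; have := l1norm_ge0 (minusL1 f g).
    move: ng; set x := l1norm (minusL1 f g); set y := l1norm c => ng hx hy.
    nra.
Qed.
End Main.


End HelpersM.
Import HelpersM.

Local Open Scope ring_scope.

Theorem theorem4p3 (R : realType) :
  (* τ is linear on A *)
  (forall (a : C R) (f g : Cu2 -> C R), inA f -> inA g ->
      tauA (plusL1 (scaleL1 a f) g) = a * tauA f + tauA g) /\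
  (* τ is bounded *)
  (exists K : R, forall f : Cu2 -> C R, inA f -> cabs (tauA f) <= K * l1norm f) /\
  (* τ is a trace *)
  (forall f g : Cu2 -> C R, inA f -> inA g -> tauA (conv f g) = tauA (conv g f)) /\
  (* τ is non-zero *)
  (exists2 f : Cu2 -> C R, inA f & tauA f != 0) /\
  (* τ(δ_e) = 0 *)
  tauA (delta R Cu2_e) = 0 /\
  (* τ vanishes on J *)
  (forall f : Cu2 -> C R, J f -> tauA f = 0) /\
  (* the induced functional on A/J is bounded for the quotient norm *)
  (exists K : R, forall f j : Cu2 -> C R, inA f -> J j ->
      cabs (tauA f) <= K * l1norm (minusL1 f j)).
Proof.
have IJ : forall j : Cu2 -> C R, J j -> Iset j.
  by move=> j Jj; apply: Jj; [exact: I_closed|exact: I_f0].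
split.
  move=> a f g hf hg; rewrite /plusL1 (tauA_D (inA_scale a hf) hg) /scaleL1.
  by rewrite (tauA_Z a hf).
split; first by exists 2%R => f hf; exact: tauA_bound.
split; first by move=> f g hf hg; exact: trace.
split.
  exists (delta R ([:: l1], [::])); first exact: inA_delta.
  rewrite /tauA (csum_point (s := ([:: l1], [::]))).
    by rewrite /delta eqxx mul1r tau_wE /tauo /= oner_neq0.
  by move=> t /negPf; rewrite /delta => ->; rewrite mul0r.
split.
  rewrite /tauA (_ : (fun w => _) = (fun _ => 0)) ?csum0 //.
  by apply: funext => w; rewrite /delta; case: eqP => [->|_]; rewrite ?mul0r // tau_wE /tauo /= mulr0.
split; first by move=> f /IJ [].
exists 2%R => f j hf /IJ [hj tj _].
have -> : tauA f = tauA (minusL1 f j) by rewrite tauA_minus // tj subr0.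
exact: tauA_bound (inA_minus hf hj).
Qed.
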